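(* Let $\alpha,\beta,\gamma\in\mathbb{R}$ with $\gamma\neq 0$, and let $G_2$ be the connected, simply connected Lie group whose Lie algebra $\mathfrak{g}_2$ has a basis $\{e_1,e_2,e_3\}$ with $[e_1,e_2]=\gamma e_2-\beta e_3$, $[e_1,e_3]=-\beta e_2-\gamma e_3$, $[e_2,e_3]=\alpha e_1$, equipped with the left-invariant Lorentzian metric $g$ for which $\{e_1,e_2,e_3\}$ is pseudo-orthonormal with $e_3$ timelike, and with the product structure $J$. Let $\lambda_0,c\in\mathbb{R}$. Then there exists a derivation $D$ of $\mathfrak{g}_2$ with $\widetilde{\mathrm{Ric}}^1=(s^1\lambda_0+c)\mathrm{Id}+D$ (i.e. $(G_2,g,J)$ is an algebraic Schouten soliton associated to the Kobayashi–Nomizu connection $\nabla^1$) if and only if $\alpha=\beta=0$ and $c=-\gamma^2+2\gamma^2\lambda_0$.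
   Context: Pseudo-orthonormal means $g(e_1,e_1)=g(e_2,e_2)=1$, $g(e_3,e_3)=-1$, $g(e_i,e_j)=0$ for $i\neq j$; left-invariant tensors are identified with their values on $\mathfrak{g}$. $\nabla$ is the Levi-Civita connection of $g$. The product structure $J$ is the left-invariant endomorphism with $Je_1=e_1$, $Je_2=e_2$, $Je_3=-e_3$. The canonical connection is $\nabla^0_XY=\nabla_XY-\frac12(\nabla_XJ)JY$, and the Kobayashi–Nomizu connection is $\nabla^1_XY=\nabla^0_XY-\frac14[(\nabla_YJ)JX-(\nabla_{JY}J)X]$. For $k=0,1$: $R^k(X,Y)Z=\nabla^k_X\nabla^k_YZ-\nabla^k_Y\nabla^k_XZ-\nabla^k_{[X,Y]}Z$; $\rho^k(X,Y)=-g(R^k(X,e_1)Y,e_1)-g(R^k(X,e_2)Y,e_2)+g(R^k(X,e_3)Y,e_3)$; $\widetilde\rho^k(X,Y)=\frac12(\rho^k(X,Y)+\rho^k(Y,X))$; $\widetilde{\mathrm{Ric}}^k$ is defined by $\widetilde\rho^k(X,Y)=g(\widetilde{\mathrm{Ric}}^k(X),Y)$; and $s^k=\widetilde\rho^k(e_1,e_1)+\widetilde\rho^k(e_2,e_2)-\widetilde\rho^k(e_3,e_3)$. A derivation of $\mathfrak{g}$ is a linear map $D$ with $D[X,Y]=[DX,Y]+[X,DY]$. $(G,g,J)$ is an algebraic Schouten soliton associated to $\nabla^k$ (with real constants $\lambda_0,c$) if $\widetilde{\mathrm{Ric}}^k=(s^k\lambda_0+c)\mathrm{Id}+D$ for some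 derivation $D$. *)

(* Defs.v *)
(* Left-invariant objects on the 3-dim Lie group G_2 are
   identified with their values on the Lie algebra g_2 = R^3 (row vectors),
   coordinates taken w.r.t. the basis (e1,e2,e3) = (e 0, e 1, e 2). *)
From HB Require Import structures.
From mathcomp Require Import all_boot all_order all_algebra.
Set Implicit Arguments. Unset Strict Implicit. Unset Printing Implicit Defensive.
Import Order.TTheory GRing.Theory Num.Theory.
Local Open Scope ring_scope.

Section Defs.
Variable R : realFieldType.

Definition vec := 'rV[R]_3.

Definition vec3 (a b c : R) : vec := \row_(i < 3) [:: a; b; c]`_i.

Definition e (i : 'I_3) : vec := delta_mx 0 i.

(* Lie bracket of g_2 :
   [e1,e2] = gam e2 - bet e3, [e1,e3] = - bet e2 - gam e3, [e2,e3] = alp e1,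
   extended bilinearly and skew-symmetrically. *)
Definition br2 (alp bet gam : R) (X Y : vec) : vec :=
  let x1 := X 0 0 in let x2 := X 0 1 in let x3 := X 0 2 in
  let y1 := Y 0 0 in let y2 := Y 0 1 in let y3 := Y 0 2 in
  (x1 * y2 - x2 * y1) *: (gam *: e 1 - bet *: e 2)
  + (x1 * y3 - x3 * y1) *: (- bet *: e 1 - gam *: e 2)
  + (x2 * y3 - x3 * y2) *: (alp *: e 0).

Definition eps (k : 'I_3) : R := if k == 2%N :> nat then -1 else 1.
Definition gm (X Y : vec) : R := \sum_(k < 3) eps k * X 0 k * Y 0 k.

Variable br : vec -> vec -> vec.

(* Levi-Civita connection of a left-invariant metric on left-invariant fields,
   given by the Koszul formula
   2 g(nabla_X Y, Z) = g([X,Y],Z) - g([Y,Z],X) + g([Z,X],Y). *)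
Definition nablaLC (X Y : vec) : vec :=
  \sum_(k < 3) (eps k * ((gm (br X Y) (e k) - gm (br Y (e k)) X
                           + gm (br (e k) X) Y) / 2)) *: e k.

Definition Jmx : 'M[R]_3 := diag_mx (vec3 1 1 (-1)).
Definition J (X : vec) : vec := X *m Jmx.

Definition nablaJ (X Y : vec) : vec := nablaLC X (J Y) - J (nablaLC X Y).

Definition nabla0 (X Y : vec) : vec := nablaLC X Y - (1/2) *: nablaJ X (J Y).

Definition nabla1 (X Y : vec) : vec :=
  nabla0 X Y - (1/4) *: (nablaJ Y (J X) - nablaJ (J Y) X).

Definition curv (nb : vec -> vec -> vec) (X Y Z : vec) : vec :=
  nb X (nb Y Z) - nb Y (nb X Z) - nb (br X Y) Z.

Definition rho (nb : vec -> vec -> vec) (X Y : vec) : R :=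
  - gm (curv nb X (e 0) Y) (e 0) - gm (curv nb X (e 1) Y) (e 1)
  + gm (curv nb X (e 2) Y) (e 2).

Definition rhot (nb : vec -> vec -> vec) (X Y : vec) : R :=
  (rho nb X Y + rho nb Y X) / 2.

Definition ricop (nb : vec -> vec -> vec) (X : vec) : vec :=
  \sum_(k < 3) (eps k * rhot nb X (e k)) *: e k.

Definition scal (nb : vec -> vec -> vec) : R :=
  rhot nb (e 0) (e 0) + rhot nb (e 1) (e 1) - rhot nb (e 2) (e 2).

(* derivations of (R^3, br); D acts on row vectors on the right *)
Definition is_derivation (D : 'M[R]_3) : Prop :=
  forall X Y : vec, br X Y *m D = br (X *m D) Y + br X (Y *m D).

Definition alg_schouten_soliton (nb : vec -> vec -> vec) (lam0 c : R) : Prop :=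
  exists D : 'M[R]_3, is_derivation D /\
    forall X : vec, ricop nb X = (scal nb * lam0 + c) *: X + X *m D.

End Defs.

(* Main.v *)
Require Import Defs.
From HB Require Import structures.
From mathcomp Require Import all_boot all_order all_algebra.
From mathcomp Require Import ring lra.
Set Implicit Arguments. Unset Strict Implicit. Unset Printing Implicit Defensive.
Import Order.TTheory GRing.Theory Num.Theory.
Local Open Scope ring_scope.

Section S.
Variable R : realFieldType.
Implicit Types a b c k : R.

Lemma vec3_0 a b c : vec3 a b c 0 0 = a. Proof. by rewrite mxE. Qed.
Lemma vec3_1 a b c : vec3 a b c 0 1 = b. Proof. by rewrite mxE. Qed.
Lemma vec3_2 a b c : vec3 a b c 0 2 = c. Proof. by rewrite mxE. Qed.

Lemma vecE (X : vec R) : X = vec3 (X 0 0) (X 0 1) (X 0 2).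
Proof.
apply/rowP => i; rewrite mxE; case: i => [[|[|[|i]]] Hi] //=;
 by congr (X _ _); apply: val_inj.
Qed.

Lemma vec3D a b c a' b' c' : vec3 a b c + vec3 a' b' c' = vec3 (a+a') (b+b') (c+c').
Proof. by apply/rowP => i; rewrite !mxE; case: i => [[|[|[|i]]] Hi]. Qed.
Lemma vec3N a b c : - vec3 a b c = vec3 (-a) (-b) (-c).
Proof. by apply/rowP => i; rewrite !mxE; case: i => [[|[|[|i]]] Hi]. Qed.
Lemma vec3Z k a b c : k *: vec3 a b c = vec3 (k*a) (k*b) (k*c).
Proof. by apply/rowP => i; rewrite !mxE; case: i => [[|[|[|i]]] Hi]. Qed.
Lemma e0E : e R 0 = vec3 1 0 0.
Proof. by apply/rowP => i; rewrite !mxE; case: i => [[|[|[|i]]] Hi]. Qed.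
Lemma e1E : e R 1 = vec3 0 1 0.
Proof. by apply/rowP => i; rewrite !mxE; case: i => [[|[|[|i]]] Hi]. Qed.
Lemma e2E : e R 2 = vec3 0 0 1.
Proof. by apply/rowP => i; rewrite !mxE; case: i => [[|[|[|i]]] Hi]. Qed.
Lemma eps0 : eps R 0 = 1. Proof. by []. Qed.
Lemma eps1 : eps R 1 = 1. Proof. by []. Qed.
Lemma eps2 : eps R 2 = -1. Proof. by []. Qed.
Lemma sum3 (V : zmodType) (F : 'I_3 -> V) : \sum_(k < 3) F k = F 0 + F 1 + F 2.
Proof.
rewrite !big_ord_recr big_ord0 /= add0r.
by congr (F _ + F _ + F _); apply: val_inj.
Qed.
Lemma JE a b c : J (vec3 a b c) = vec3 a b (-c).
Proof.
apply/rowP => i; rewrite /J /Jmx mul_mx_diag !mxE; case: i => [[|[|[|i]]] Hi] //=; 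
 by rewrite ?mulr1 ?mulrN1.
Qed.
Lemma gmE a b c a' b' c' : gm (vec3 a b c) (vec3 a' b' c') = a*a' + b*b' - c*c'.
Proof. rewrite /gm sum3 !vec3_0 !vec3_1 !vec3_2 eps0 eps1 eps2; ring. Qed.

Variables alp bet gam : R.
Notation br := (br2 alp bet gam).

Lemma br2E x1 x2 x3 y1 y2 y3 : br (vec3 x1 x2 x3) (vec3 y1 y2 y3) =
  vec3 (alp * (x2*y3-x3*y2)) (gam*(x1*y2-x2*y1) - bet*(x1*y3-x3*y1))
       (-bet*(x1*y2-x2*y1) - gam*(x1*y3-x3*y1)).
Proof.
rewrite /br2 ?(vec3_0, vec3_1, vec3_2, e0E, e1E, e2E, vec3D, vec3N, vec3Z).
congr (vec3 _ _ _); ring.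
Qed.

Ltac norm := rewrite ?(JE, e0E, e1E, e2E, vec3_0, vec3_1, vec3_2, vec3D, vec3N,
   vec3Z, gmE, br2E, eps0, eps1, eps2, sum3).

Lemma nabla1E x1 x2 x3 y1 y2 y3 :
  nabla1 br (vec3 x1 x2 x3) (vec3 y1 y2 y3) =
  vec3 (gam*x2*y2 - alp*x3*y2) (-gam*x2*y1 + bet*x3*y1) (-gam*x1*y3).
Proof.
(rewrite /nabla1 /nabla0 /nablaJ /nablaLC; norm).
(congr (vec3 _ _ _); by field).
Qed.

Ltac norm1 := rewrite ?(nabla1E, e0E, e1E, e2E, vec3_0, vec3_1, vec3_2, vec3D, vec3N,
   vec3Z, gmE, br2E).

Lemma curvE x1 x2 x3 y1 y2 y3 z1 z2 z3 :
  curv br (nabla1 br) (vec3 x1 x2 x3) (vec3 y1 y2 y3) (vec3 z1 z2 z3) =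
  vec3 (gam^+2*x2*y1*z2 - gam^+2*x1*y2*z2 - bet*gam*x3*y2*z1 - bet*gam*x3*y1*z2 + bet*gam*x2*y3*z1 + bet*gam*x1*y3*z2 + alp*gam*x3*y2*z1 + alp*gam*x3*y1*z2 - alp*gam*x2*y3*z1 - alp*gam*x1*y3*z2 + alp*bet*x2*y1*z2 - alp*bet*x1*y2*z2) (-gam^+2*x2*y1*z1 + gam^+2*x1*y2*z1 + bet*gam*x3*y2*z2 - bet*gam*x2*y3*z2 - bet^+2*x2*y1*z1 + bet^+2*x1*y2*z1 - alp*gam*x3*y2*z2 + alp*gam*x2*y3*z2) (-alp*gam*x3*y2*z3 + alp*gam*x2*y3*z3).
Proof.
rewrite /curv. Time norm1.
(congr (vec3 _ _ _); ring).
Qed.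

Lemma rhoE x1 x2 x3 y1 y2 y3 :
  rho br (nabla1 br) (vec3 x1 x2 x3) (vec3 y1 y2 y3) =
  (-gam^+2*x2*y2 - gam^+2*x1*y1 - bet^+2*x1*y1 - alp*gam*x2*y3 - alp*bet*x2*y2).
Proof.
rewrite /rho !(e0E, e1E, e2E) !curvE. Time norm1.
ring.
Qed.

Lemma ricopE x1 x2 x3 :
  ricop br (nabla1 br) (vec3 x1 x2 x3) =
  vec3 ((-gam^+2 - bet^+2) * x1) ((-gam^+2 - alp*bet) * x2 - alp*gam/2 * x3)
       (alp*gam/2 * x2).
Proof.
rewrite /ricop /rhot sum3 eps0 eps1 eps2 !(e0E, e1E, e2E) !rhoE. norm1.
congr (vec3 _ _ _); by field.
Qed.

Lemma scalE : scal br (nabla1 br) = -2 * gam^+2 - bet^+2 - alp*bet.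
Proof.
rewrite /scal /rhot !(e0E, e1E, e2E) !rhoE. by field.
Qed.

Lemma diagE a b c p q r :
  vec3 a b c *m diag_mx (vec3 p q r) = vec3 (a * p) (b * q) (c * r).
Proof.
apply/rowP => i; rewrite mul_mx_diag !mxE; case: i => [[|[|[|i]]] Hi] //=.
Qed.

Lemma vec3M a b c (D : 'M[R]_3) :
  vec3 a b c *m D = a *: (e R 0 *m D) + b *: (e R 1 *m D) + c *: (e R 2 *m D).
Proof.
rewrite !scalemxAl -!mulmxDl e0E e1E e2E !vec3Z !vec3D.
congr (vec3 _ _ _ *m _); ring.
Qed.

Lemma ring0 (x y : R) : y = 0 -> x = y -> x = 0.
Proof. by move=> h ->. Qed.

Lemma eqsub (x y : R) : x = y -> x - y = 0.
Proof. by move=> ->; rewrite subrr. Qed.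
End S.

Ltac normH H := rewrite ?(nabla1E, e0E, e1E, e2E, vec3_0, vec3_1, vec3_2, vec3D, vec3N,
   vec3Z, gmE, br2E) in H.
Ltac normG := rewrite ?(nabla1E, e0E, e1E, e2E, vec3_0, vec3_1, vec3_2, vec3D, vec3N,
   vec3Z, gmE, br2E).

Unset Implicit Arguments.
Theorem theorem4p5 (R : realFieldType) (alp bet gam lam0 c : R) :
  gam != 0 ->
  (alg_schouten_soliton (br2 alp bet gam)
     (nabla1 (br2 alp bet gam)) lam0 c
   <-> (alp = 0 /\ bet = 0 /\ c = - gam ^+ 2 + 2 * gam ^+ 2 * lam0)).
Proof.
move=> g0; split.
- case=> D [HD HR].
  set k := (scal _ _ * lam0 + c) in HR.
  have Hd0 : e R 0 *m D = vec3 (-gam^+2 - bet^+2 - k) 0 0.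
  { rewrite -[e R 0 *m D](addKr (k *: e R 0)) -HR e0E ricopE; normG; congr (vec3 _ _ _); ring. }
  have Hd1 : e R 1 *m D = vec3 0 (-gam^+2 - alp*bet - k) (alp*gam/2).
  { rewrite -[e R 1 *m D](addKr (k *: e R 1)) -HR e1E ricopE; normG; congr (vec3 _ _ _); ring. }
  have Hd2 : e R 2 *m D = vec3 0 (-(alp*gam/2)) (-k).
  { rewrite -[e R 2 *m D](addKr (k *: e R 2)) -HR e2E ricopE; normG; congr (vec3 _ _ _); ring. }
  have H01 := HD (e R 0) (e R 1).
  have H02 := HD (e R 0) (e R 2).
  have H12 := HD (e R 1) (e R 2).
  rewrite !(Hd0,Hd1,Hd2) !(e0E,e1E,e2E) !br2E !vec3M !(Hd0,Hd1,Hd2) in H01 H02 H12.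
  normH H01. normH H02.
  move/(congr1 (fun v : vec R => v 0 1)): (H01); cbv beta; rewrite !vec3_1 => /eqsub E1.
  move/(congr1 (fun v : vec R => v 0 2)): (H01); cbv beta; rewrite !vec3_2 => /eqsub E2.
  move/(congr1 (fun v : vec R => v 0 1)): (H02); cbv beta; rewrite !vec3_1 => /eqsub E3.
  have E1' : gam * (k + gam^+2 + bet^+2 + alp*bet) = 0 by apply: (ring0 E1); field.
  have hk : k = - gam^+2 - bet^+2 - alp*bet.
  { move/eqP: E1'; rewrite mulf_eq0 (negbTE g0) /= => /eqP E.
    apply/eqP; rewrite -subr_eq0; apply/eqP; apply: (ring0 E); ring. }
  have hg2 : 0 < gam^+2 by rewrite lt0r sqrf_eq0 g0 sqr_ge0.
  have E2' : gam^+2 * (alp - bet) = 0 by apply: (ring0 E2); rewrite hk; field.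
  have hab : alp = bet.
  { move/eqP: E2'; rewrite mulf_eq0 (gt_eqF hg2) /= subr_eq0 => /eqP //. }
  have E3' : 2 * (alp * (gam^+2 + alp^+2)) = 0 by apply: (ring0 E3); rewrite hk -hab; field.
  have ha2 : 0 < gam^+2 + alp^+2 by have := sqr_ge0 alp; lra.
  have ha : alp = 0.
  { move/eqP: E3'; rewrite !mulf_eq0 (gt_eqF ha2) pnatr_eq0 /= orbF => /eqP //. }
  have hb : bet = 0 by rewrite -hab.
  split => //; split => //.
  have hk' : (-2 * gam^+2 - bet^+2 - alp*bet) * lam0 + c = - gam^+2.
  { rewrite -scalE -/k hk ha hb; ring. }
  rewrite -[c](addKr ((-2 * gam^+2 - bet^+2 - alp*bet) * lam0)) hk' ha hb; ring.
- case=> -> [-> ->].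
  exists (diag_mx (vec3 0 0 (gam^+2))); split.
  + move=> X Y; rewrite (vecE X) (vecE Y) !(br2E, diagE); normG.
    congr (vec3 _ _ _); ring.
  + move=> X; rewrite (vecE X) ricopE scalE diagE; normG.
    congr (vec3 _ _ _); by field.
Qed.
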